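(* Let $1\le k\le n$. If $A\in H_n^k$ and $A=\pi U_{n,k}\sigma=\rho U_{n,k}\tau$ with $\pi,\sigma,\rho,\tau\in S_n$, then $\pi\sigma=\rho\tau$; hence $T_{n,k}:H_n^k\to S_n$, $T_{n,k}(\pi U_{n,k}\sigma)=\pi\sigma$, is well defined. Moreover $T_{n,k}$ preserves the action of $S_n\times S_n$, i.e. $$T_{n,k}(\pi A\sigma)=\pi\, T_{n,k}(A)\,\sigma\quad\text{for all }A\in H_n^k,\ \pi,\sigma\in S_n.$$
   Context: Permutations are composed as functions, and $\pi\in S_n$ is identified with the $n\times n$ permutation matrix whose $(i,j)$ entry is $1$ iff $i=\pi(j)$. $U_{n,k}$ is the $n\times n$ $(0,1)$-matrix whose upper left $k\times k$ block is upper triangular with all entries on and above the diagonal equal to $1$, whose upper right $k\times(n-k)$ block has all entries $1$, whose lower left $(n-k)\times k$ block is zero, and whose lower right block is $I_{n-k}$. $H_n^k=\{\pi U_{n,k}\sigma\mid \pi,\sigma\in S_n\}\subseteq GL_n(\mathbb{Z}_2)$. *)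

(* Defs.v *)
From HB Require Import structures.
From mathcomp Require Import all_boot all_order all_algebra all_fingroup.
Set Implicit Arguments. Unset Strict Implicit. Unset Printing Implicit Defensive.
Import GRing.Theory.
Local Open Scope ring_scope.

(* Function composition of permutations: permcomp p q = p \o q.
   (MathComp's group product (q * p)%g applies q first.) *)
Definition permcomp n (p q : 'S_n) : 'S_n := (q * p)%g.

Definition pmx n (p : 'S_n) : 'M['F_2]_n :=
  \matrix_(i, j) (if i == p j then 1 else 0).

Definition Umx n k : 'M['F_2]_n :=
  \matrix_(i, j) (if (i < k)%N then (if (i <= j)%N then 1 else 0)
                  else (if i == j then 1 else 0)).

Definition inH n k (A : 'M['F_2]_n) : Prop :=
  exists p s : 'S_n, A = pmx p *m Umx n k *m pmx s.

(* T_{n,k}: pick some decomposition A = pi U sigma and return pi \o sigma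
   (value 1 outside H_n^k, irrelevant). *)
Definition Tmx n k (A : 'M['F_2]_n) : 'S_n :=
  match [pick ps : 'S_n * 'S_n | A == pmx ps.1 *m Umx n k *m pmx ps.2] with
  | Some ps => permcomp ps.1 ps.2
  | None => 1%g
  end.
Arguments Umx : clear implicits.
Arguments inH : clear implicits.
Arguments Tmx : clear implicits.

(* Main.v *)
Require Import Defs.
From mathcomp Require Import all_boot all_order all_algebra all_fingroup.
Local Open Scope ring_scope.

Lemma perm_ge_id n (g : 'S_n) : (forall i : 'I_n, (i <= g i)%N) -> g = 1%g.
Proof.
move=> H.
have Hs : (\sum_(i : 'I_n) (g i : nat) = \sum_(i : 'I_n) (i : nat))%N.
  by rewrite [RHS](reindex_inj (@perm_inj _ g)).
have H0 : (\sum_(i : 'I_n) (g i - i) = 0)%N.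
  apply/eqP; rewrite -(eqn_add2r (\sum_(i : 'I_n) (i : nat))%N) add0n -big_split /=.
  rewrite -Hs; apply/eqP/eq_bigr => i _; by rewrite subnK.
apply/permP => i; rewrite perm1; apply/val_inj => /=.
have := introT eqP H0; rewrite sum_nat_eq0 => /forallP /(_ i) /=.
rewrite subn_eq0 => Hle; apply/eqP; by rewrite eqn_leq Hle H.
Qed.

Lemma pmxE n (p : 'S_n) : pmx p = perm_mx p^-1.
Proof.
apply/matrixP => i j; rewrite /pmx /perm_mx !mxE /=.
have -> : (i == p j) = ((p^-1)%g i == j).
  apply/eqP/eqP => [->|<-]; by rewrite ?permK ?permKV.
by case: eqP.
Qed.

Lemma entryE n (p s : 'S_n) (M : 'M['F_2]_n) i j :
  (pmx p *m M *m pmx s) i j = M ((p^-1)%g i) (s j).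
Proof.
rewrite !pmxE -row_permE.
have -> : perm_mx s^-1 = perm_mx (s^-1)^-1^-1 by rewrite invgK.
rewrite -col_permE !mxE invgK.
by [].
Qed.

Lemma Udiag n k (x : 'I_n) : Umx n k x x = 1.
Proof. rewrite mxE leqnn eqxx; by case: ifP. Qed.

Lemma Ule n k (x y : 'I_n) : Umx n k x y = 1 -> (x <= y)%N.
Proof.
rewrite mxE; case: ifP => _; case: ifP => // H _.
by move/eqP: H => ->.
Qed.

Lemma part1 n k (p s r t : 'S_n) :
  pmx p *m Umx n k *m pmx s = pmx r *m Umx n k *m pmx t ->
  permcomp p s = permcomp r t.
Proof.
move=> E.
have key : forall x : 'I_n, (r^-1%g (p x) <= t (s^-1%g x))%N.
  move=> x.
  have := congr1 (fun M : 'M['F_2]_n => M (p x) ((s^-1)%g x)) E => /=.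
  rewrite !entryE permK permKV Udiag => /esym; exact: Ule.
have Hg : (r * p^-1 * s^-1 * t = 1)%g.
  apply: perm_ge_id => z.
  rewrite !permM.
  have := key ((p^-1)%g (r z)).
  by rewrite permKV permK.
rewrite /permcomp.
move/(congr1 (fun x => (r * p^-1 * s^-1)^-1 * x)%g): Hg.
rewrite mulg1 mulKg => ->.
by rewrite !invMg !invgK !mulgA mulgKV.
Qed.

Lemma pmxM n (p q : 'S_n) : pmx p *m pmx q = pmx (permcomp p q).
Proof.
by rewrite !pmxE -perm_mxM /permcomp invMg.
Qed.

Lemma Tmx_eq n k (M : 'M['F_2]_n) (a b : 'S_n) :
  M = pmx a *m Umx n k *m pmx b -> Tmx n k M = permcomp a b.
Proof.
move=> HM; rewrite /Tmx; case: pickP => [ps /eqP H | H].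
  by apply: (@part1 n k); rewrite -H.
by have := H (a, b); rewrite /= HM eqxx.
Qed.

Theorem mainTheorem3 (n k : nat) (hk1 : (1 <= k)%N) (hkn : (k <= n)%N) :
  (forall p s r t : 'S_n,
      pmx p *m Umx n k *m pmx s = pmx r *m Umx n k *m pmx t ->
      permcomp p s = permcomp r t)
  /\
  (forall (A : 'M['F_2]_n) (p s : 'S_n), inH n k A ->
      Tmx n k (pmx p *m A *m pmx s) = permcomp p (permcomp (Tmx n k A) s)).
Proof.
split; first by move=> p s r t; exact: part1.
move=> A p s [a [b HA]].
rewrite (@Tmx_eq n k A a b HA).
rewrite (@Tmx_eq n k _ (permcomp p a) (permcomp b s)).
  by rewrite /permcomp !mulgA.
by rewrite HA -!mulmxA pmxM !mulmxA pmxM.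
Qed.
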